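(* Let $K=(S,L,\to)$ be a Kripke structure and $s,t\in S$. Then $s\leftrightarrow_b^{\Delta}t$ if and only if for every $\mathsf{CTL}_\infty$ formula $\varphi$: $s\models\varphi\iff t\models\varphi$.
   Context: Fix a set $\mathbf{AP}$ of atomic propositions. A Kripke structure is a triple $K=(S,L,\to)$ with $S$ a set of states, $L:S\to\mathcal{P}(\mathbf{AP})$ and $\to\subseteq S\times S$ (not required to be total). A finite path from $s$ is a sequence $s_0,\dots,s_n$ with $s_0=s$ and $s_k\to s_{k+1}$ for $0\le k<n$; an infinite path from $s$ is a sequence $s_0,s_1,\dots$ with $s_0=s$ and $s_k\to s_{k+1}$ for all $k$. A colouring is a function $\mathcal{C}$ from $S$ into an arbitrary set of colours. For a path $\pi=s_0,s_1,\dots$, $\mathcal{C}(\pi)$ is obtained from $\mathcal{C}(s_0),\mathcal{C}(s_1),\dots$ by contracting every maximal (finite or infinite) block of consecutive equal colours to a single colour. The $\mathcal{C}(\pi)$ with $\pi$ a path from $s$ are the $\mathcal{C}$-coloured traces of $s$; $\mathcal{C}(\pi)$ is a divergent $\mathcal{C}$-coloured trace of $s$ if $\pi$ is an infinite path from $s$ and $\mathcal{C}(\pi)$ is finite. A colouring is consistent if any two states of the same colour have the same $L$-label and the same $\mathcal{C}$-coloured traces; a consistent colouring preserves divergence if any two states of the same colour have the same divergent $\mathcal{C}$-coloured traces. $s\leftrightarrow_b^{\Delta}t$ iff there is a consistent, divergence preserving colouring $\mathcal{C}$ with $\mathcal{C}(s)=\mathcal{C}(t)$. $\mathsf{CTL}_\infty$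 formulas: $\varphi::=p\mid\neg\varphi\mid\bigwedge\Phi'\mid\exists(\varphi\,\mathsf{U}\,\varphi)\mid\exists^\infty\mathsf{G}\varphi$, with $p\in\mathbf{AP}$ and $\Phi'$ an arbitrary set of formulas. Semantics: $s\models p$ iff $p\in L(s)$; negation and conjunction as usual; $s\models\exists(\varphi\,\mathsf{U}\,\varphi')$ iff there is a finite path $s_0,\dots,s_k$ from $s$ with $s_k\models\varphi'$ and $s_i\models\varphi$ for all $0\le i<k$; $s\models\exists^\infty\mathsf{G}\varphi$ iff there is an infinite path from $s$ all of whose states satisfy $\varphi$. *)

(* Defs.v *)
From Stdlib Require Import List Arith.
Set Implicit Arguments.

Inductive trace (Col : Type) : Type :=
| TFin : list Col -> trace Col
| TInf : (nat -> Col) -> trace Col.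

(* Length of a path/sequence: [Some n] = positions 0..n (finite),
   [None] = infinite. *)
Definition in_dom (len : option nat) (k : nat) : Prop :=
  match len with Some n => k <= n | None => True end.

Definition tr_at (Col : Type) (w : trace Col) (j : nat) : option Col :=
  match w with TFin l => nth_error l j | TInf f => Some (f j) end.

Definition tr_pos (Col : Type) (w : trace Col) (j : nat) : Prop :=
  match w with TFin l => j < length l | TInf _ => True end.

(* [contracts c len w]: w is obtained from the colour sequence
   c 0, c 1, ... (of length [len]) by contracting every maximal block of
   consecutive equal colours to a single colour.  [g k] is the index in
   [w] of the block containing position [k]. *)
Definition contracts (Col : Type) (c : nat -> Col) (len : option nat)
  (w : trace Col) : Prop :=
  exists g : nat -> nat,
    g 0 = 0 /\
    (forall k, in_dom len (S k) ->
       (c (S k) = c k /\ g (S k) = g k) \/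
       (c (S k) <> c k /\ g (S k) = S (g k))) /\
    (forall k, in_dom len k -> tr_at w (g k) = Some (c k)) /\
    (forall j, tr_pos w j -> exists k, in_dom len k /\ g k = j).

Definition path (St : Type) (R : St -> St -> Prop) (s : St)
  (len : option nat) (pi : nat -> St) : Prop :=
  pi 0 = s /\ forall k, in_dom len (S k) -> R (pi k) (pi (S k)).

Section Colourings.
Variables (AP St : Type) (L : St -> AP -> Prop) (R : St -> St -> Prop).

Definition ctrace (Col : Type) (C : St -> Col) (s : St) (w : trace Col) : Prop :=
  exists len pi, path R s len pi /\ contracts (fun k => C (pi k)) len w.

Definition divtrace (Col : Type) (C : St -> Col) (s : St) (w : trace Col) : Prop :=
  exists pi, path R s None pi /\ contracts (fun k => C (pi k)) None w /\
             exists l, w = TFin l.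

Definition consistent (Col : Type) (C : St -> Col) : Prop :=
  forall s t, C s = C t ->
    (forall p, L s p <-> L t p) /\ (forall w, ctrace C s w <-> ctrace C t w).

Definition div_preserving (Col : Type) (C : St -> Col) : Prop :=
  consistent C /\
  forall s t, C s = C t -> forall w, divtrace C s w <-> divtrace C t w.

Definition bbisim_div (s t : St) : Prop :=
  exists (Col : Type) (C : St -> Col), div_preserving C /\ C s = C t.

End Colourings.

Inductive form (AP : Type) : Type :=
| FAtom : AP -> form AP
| FNeg : form AP -> form AP
| FConj : forall I : Type, (I -> form AP) -> form AP
| FEU : form AP -> form AP -> form AP
| FEG : form AP -> form AP.

Fixpoint sat (AP St : Type) (L : St -> AP -> Prop) (R : St -> St -> Prop)
  (phi : form AP) (s : St) {struct phi} : Prop :=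
  match phi with
  | FAtom p => L s p
  | FNeg psi => ~ sat L R psi s
  | @FConj _ Ix f => forall i : Ix, sat L R (f i) s
  | FEU phi1 phi2 =>
      exists n pi, path R s (Some n) pi /\ sat L R phi2 (pi n) /\
                   forall i, i < n -> sat L R phi1 (pi i)
  | FEG psi =>
      exists pi, path R s None pi /\ forall k, sat L R psi (pi k)
  end.

(* Main.v *)
Require Import Defs.
From Stdlib Require Import List Arith Lia Classical ClassicalEpsilon FunctionalExtensionality PropExtensionality.
Set Implicit Arguments.

Lemma in_dom_le len k k' : in_dom len k' -> k <= k' -> in_dom len k.
Proof. destruct len; simpl; lia. Qed.

Lemma tr_at_pos (Col:Type) (w : trace Col) j a : tr_at w j = Some a -> tr_pos w j.
Proof. destruct w; simpl; auto. intro H. apply nth_error_Some. congruence. Qed.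

Lemma ex_min (P : nat -> Prop) : (exists n, P n) -> exists n, P n /\ forall k, k < n -> ~ P k.
Proof.
  intros [n Hn]. revert Hn. induction n as [n IH] using (well_founded_induction lt_wf).
  intros Hn. destruct (classic (exists k, k < n /\ P k)) as [[k [Hk Pk]]|Hno].
  - exact (IH k Hk Pk).
  - exists n. split; auto. intros k Hk Pk. apply Hno. eauto.
Qed.

Lemma ivt (g : nat -> nat) N : g 0 = 0 -> (forall k, k < N -> g (S k) <= S (g k)) ->
  forall j, j <= g N -> exists i, i <= N /\ g i = j.
Proof.
  intros H0. induction N as [|N IH]; intros Hs j Hj.
  - exists 0. split; lia.
  - destruct (Nat.eq_dec j (g (S N))) as [->|Hne].
    + exists (S N); split; auto.
    + assert (Hle : g (S N) <= S (g N)) by (apply Hs; lia).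
      destruct (IH (fun k Hk => Hs k ltac:(lia)) j ltac:(lia)) as [i [Hi Hgi]].
      exists i; split; auto.
Qed.

Definition cg (Col:Type) (c : nat -> Col) len (w : trace Col) (g : nat -> nat) :=
    g 0 = 0 /\
    (forall k, in_dom len (S k) ->
       (c (S k) = c k /\ g (S k) = g k) \/
       (c (S k) <> c k /\ g (S k) = S (g k))) /\
    (forall k, in_dom len k -> tr_at w (g k) = Some (c k)) /\
    (forall j, tr_pos w j -> exists k, in_dom len k /\ g k = j).

Section G.
Variables (Col : Type) (c : nat -> Col) (len : option nat) (w : trace Col) (g : nat -> nat).
Hypothesis H : cg c len w g.

Lemma g_mono d k : in_dom len (k + d) -> g k <= g (k + d).
Proof.
  destruct H as [H0 [Hs _]].
  induction d; intros Hd. rewrite Nat.add_0_r; lia.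
  rewrite Nat.add_succ_r in *. assert (Hd' := in_dom_le _ Hd (le_S _ _ (le_n _))).
  specialize (IHd Hd'). destruct (Hs _ Hd) as [[_ E]|[_ E]]; lia.
Qed.

Lemma g_mono' k k' : k <= k' -> in_dom len k' -> g k <= g k'.
Proof. intros Hk Hd. replace k' with (k + (k' - k)) in * by lia. apply g_mono; auto. Qed.

Lemma g_le k : in_dom len k -> g k <= k.
Proof.
  destruct H as [H0 [Hs _]].
  induction k; intros Hd. lia.
  assert (Hd' := in_dom_le _ Hd (le_S _ _ (le_n _))).
  specialize (IHk Hd'). destruct (Hs _ Hd) as [[_ E]|[_ E]]; lia.
Qed.

Lemma g_col k k' : in_dom len k -> in_dom len k' -> g k = g k' -> c k = c k'.
Proof.
  destruct H as [_ [_ [Ht _]]]. intros Hk Hk' E.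
  pose proof (Ht _ Hk) as A. pose proof (Ht _ Hk') as B. rewrite E in A. congruence.
Qed.

Lemma adj j a b : tr_at w j = Some a -> tr_at w (S j) = Some b -> a <> b.
Proof.
  destruct H as [H0 [Hs [Ht Hsur]]]. intros Ha Hb.
  destruct (Hsur (S j) (tr_at_pos _ _ Hb)) as [k [Hk Hg]].
  revert Hk Hg. induction k; intros Hk Hg. congruence.
  assert (Hd' := in_dom_le _ Hk (le_S _ _ (le_n _))).
  destruct (Hs _ Hk) as [[_ E]|[Hne E]].
  - apply IHk; auto; congruence.
  - assert (g k = j) by lia.
    pose proof (Ht _ Hk) as A. pose proof (Ht _ Hd') as B.
    rewrite Hg in A. rewrite H1 in B. congruence.
Qed.

Lemma colour_match (c' : nat -> Col) len' g' k :
  cg c' len' w g' -> in_dom len' k -> exists k', in_dom len k' /\ c k' = c' k /\ g k' = g' k.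
Proof.
  intros [_ [_ [Ht' _]]] Hk. destruct H as [_ [_ [Ht Hsur]]].
  pose proof (Ht' _ Hk) as A.
  destruct (Hsur _ (tr_at_pos _ _ A)) as [k' [Hk' Hg]].
  exists k'. split; auto. split; auto. pose proof (Ht _ Hk') as B. rewrite Hg in B. congruence.
Qed.

End G.

Lemma fin_inf_false (Col : Type) (c : nat -> Col) n f g : cg c (Some n) (TInf f) g -> False.
Proof.
  intros Hc. pose proof Hc as [_ [_ [_ Hsur]]].
  destruct (Hsur (S n) I) as [k [Hk Hg]].
  pose proof (g_le Hc k Hk). simpl in Hk. lia.
Qed.

Lemma cg_single (Col : Type) (c : nat -> Col) len a g k :
  cg c len (TFin (a :: nil)) g -> in_dom len k -> c k = a.
Proof.
  intros [_ [_ [Ht _]]] Hk. specialize (Ht _ Hk). simpl in Ht.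
  destruct (g k) as [|[|]]; simpl in Ht; congruence.
Qed.

Lemma in_dom_shift len m k : in_dom len m ->
  (in_dom (option_map (fun n => n - m) len) k <-> in_dom len (m + k)).
Proof. destruct len; simpl; lia. Qed.
Arguments in_dom_shift : clear implicits.

Lemma decomp (Col : Type) (c : nat -> Col) len a b l g :
  cg c len (TFin (a :: b :: l)) g ->
  exists m, 0 < m /\ in_dom len m /\ (forall i, i < m -> c i = a) /\ c m = b /\ b <> a /\
    exists g', cg (fun k => c (m + k)) (option_map (fun n => n - m) len) (TFin (b :: l)) g'.
Proof.
  intros Hc. pose proof Hc as [H0 [Hs [Ht Hsur]]].
  assert (Hp : tr_pos (TFin (a :: b :: l)) 1) by (simpl; lia).
  destruct (ex_min (fun k => in_dom len k /\ g k = 1) (Hsur 1 Hp)) as [m [[Hm Hgm] Hmin]].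
  assert (Hm0 : 0 < m) by (destruct m; [congruence|lia]).
  assert (Hz : forall i, i < m -> g i = 0).
  { induction i; intros Hi; auto.
    assert (Hd : in_dom len (S i)) by (apply (in_dom_le _ Hm); lia).
    specialize (IHi ltac:(lia)).
    assert (g (S i) <> 1) by (intro E; apply (Hmin (S i) Hi); auto).
    destruct (Hs _ Hd) as [[_ E]|[_ E]]; lia. }
  assert (Hca : forall i, i < m -> c i = a).
  { intros i Hi. pose proof (Ht i (in_dom_le _ (k:=i) Hm ltac:(lia))) as T. rewrite Hz in T; auto.
    simpl in T. congruence. }
  assert (Hcb : c m = b).
  { pose proof (Ht m Hm) as T. rewrite Hgm in T. simpl in T. congruence. }
  exists m. split; auto. split; auto. split; auto. split; auto. split.
  { intro E. pose proof (Ht m Hm) as T. rewrite Hgm in T. 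
    apply (adj Hc 0 (a:=a) (b:=c m)); auto. congruence. }
  assert (Hge : forall k, in_dom len (m + k) -> 1 <= g (m + k)).
  { intros k Hk. rewrite <- Hgm. apply (g_mono Hc). auto. }
  exists (fun k => g (m + k) - 1). repeat split.
  - rewrite Nat.add_0_r. lia.
  - intros k Hk. apply (in_dom_shift _ _ _ Hm) in Hk. cbv beta. rewrite Nat.add_succ_r in *.
    pose proof (Hge k (in_dom_le _ (k:=m+k) Hk ltac:(lia))).
    destruct (Hs _ Hk) as [[E1 E2]|[E1 E2]]; [left|right]; split; auto; lia.
  - intros k Hk. apply (in_dom_shift _ _ _ Hm) in Hk. pose proof (Hge k Hk).
    pose proof (Ht _ Hk) as T. destruct (g (m + k)) as [|p]; [lia|].
    simpl in T |- *. rewrite Nat.sub_0_r. exact T.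
  - intros j Hj. simpl in Hj.
    destruct (Hsur (S j) ltac:(simpl; lia)) as [k [Hk Hg]].
    assert (m <= k).
    { destruct (le_lt_dec m k); auto. rewrite Hz in Hg; [congruence|auto]. }
    exists (k - m). split.
    + apply (in_dom_shift _ _ _ Hm). replace (m + (k - m)) with k by lia. auto.
    + replace (m + (k - m)) with k by lia. lia.
Qed.

Lemma path_shift (St : Type) (R : St -> St -> Prop) x len pi m :
  path R x len pi -> in_dom len m ->
  path R (pi m) (option_map (fun n => n - m) len) (fun k => pi (m + k)).
Proof.
  intros [H0 Hs] Hm. split. f_equal; lia.
  intros k Hk. apply (in_dom_shift _ _ _ Hm) in Hk. rewrite Nat.add_succ_r in *. auto.
Qed.

Lemma path_prefix (St : Type) (R : St -> St -> Prop) x len pi m :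
  path R x len pi -> in_dom len m -> path R x (Some m) pi.
Proof.
  intros [H0 Hs] Hm. split; auto. intros k Hk. apply Hs. apply (in_dom_le _ Hm). simpl in Hk; auto.
Qed.

Lemma in_dom_add len n k :
  in_dom (option_map (Nat.add n) len) k <-> (k <= n \/ in_dom len (k - n)).
Proof. destruct len; simpl; lia. Qed.

Lemma cons_path (St Col : Type) (R : St -> St -> Prop) (C : St -> Col) z n rho a len sigma l g :
  path R z (Some n) rho -> 0 < n -> (forall i, i < n -> C (rho i) = a) ->
  path R (rho n) len sigma -> cg (fun k => C (sigma k)) len (TFin l) g -> C (sigma 0) <> a ->
  let pi := fun k => if k <? n then rho k else sigma (k - n) in
  path R z (option_map (Nat.add n) len) pi /\
  exists g', cg (fun k => C (pi k)) (option_map (Nat.add n) len) (TFin (a :: l)) g'.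
Proof.
  intros [Hr0 Hrs] Hn Hra [Hs0 Hss] [G0 [Gs [Gt Gsur]]] Hne pi. split.
  - split.
    + unfold pi. destruct (Nat.ltb_spec 0 n); [auto|lia].
    + intros k Hk. apply in_dom_add in Hk. unfold pi.
      destruct (Nat.ltb_spec k n); destruct (Nat.ltb_spec (S k) n).
      * apply Hrs. simpl; lia.
      * assert (S k = n) by lia. subst n. rewrite Nat.sub_diag, Hs0. apply Hrs. simpl; lia.
      * lia.
      * replace (S k - n) with (S (k - n)) by lia. apply Hss.
        destruct Hk as [Hk|Hk]; [lia|]. replace (S (k - n)) with (S k - n) by lia. auto.
  - exists (fun k => if k <? n then 0 else S (g (k - n))). unfold pi. repeat split.
    + destruct (Nat.ltb_spec 0 n); [auto|lia].
    + intros k Hk. apply in_dom_add in Hk.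
      destruct (Nat.ltb_spec k n); destruct (Nat.ltb_spec (S k) n).
      * left. rewrite !Hra by lia. auto.
      * assert (S k = n) by lia. subst n. rewrite Nat.sub_diag, G0. right.
        rewrite Hra by lia. auto.
      * lia.
      * replace (S k - n) with (S (k - n)) by lia.
        assert (in_dom len (S (k - n))).
        { destruct Hk as [Hk|Hk]; [lia|]. replace (S (k - n)) with (S k - n) by lia. auto. }
        destruct (Gs _ H1) as [[E1 E2]|[E1 E2]]; [left|right]; split; auto; congruence.
    + intros k Hk. apply in_dom_add in Hk. destruct (Nat.ltb_spec k n).
      * simpl. rewrite Hra; auto.
      * simpl. apply Gt. destruct Hk as [Hk|Hk]; auto.
        replace (k - n) with 0 by lia. destruct len; simpl; lia.
    + intros j Hj. destruct j as [|j].
      * exists 0. split. apply in_dom_add; lia. destruct (Nat.ltb_spec 0 n); [auto|lia].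
      * simpl in Hj. destruct (Gsur j ltac:(simpl; lia)) as [k [Hk Hg]].
        exists (n + k). split.
        -- apply in_dom_add. right. replace (n + k - n) with k by lia. auto.
        -- destruct (Nat.ltb_spec (n + k) n); [lia|]. replace (n + k - n) with k by lia. congruence.
Qed.

Section Constr.
Variables (Col : Type) (c : nat -> Col).
Definition same k : bool := if excluded_middle_informative (c (S k) = c k) then true else false.
Fixpoint gc k := match k with 0 => 0 | S k' => if same k' then gc k' else S (gc k') end.
Fixpoint lst k : list Col :=
  match k with 0 => c 0 :: nil | S k' => if same k' then lst k' else lst k' ++ c (S k') :: nil end.

Lemma gc_step k : (c (S k) = c k /\ gc (S k) = gc k) \/ (c (S k) <> c k /\ gc (S k) = S (gc k)).
Proof. simpl. unfold same. destruct (excluded_middle_informative (c (S k) = c k)); auto. Qed.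

Lemma len_lst k : length (lst k) = S (gc k).
Proof. induction k; simpl; auto. unfold same. destruct (excluded_middle_informative _); auto.
  rewrite length_app. simpl. lia. Qed.

Lemma nth_lst k : nth_error (lst k) (gc k) = Some (c k).
Proof. induction k; simpl; auto. unfold same. destruct (excluded_middle_informative _) as [E|E].
  - rewrite E; auto.
  - rewrite nth_error_app2; rewrite len_lst; [|lia]. rewrite Nat.sub_diag. reflexivity. Qed.

Lemma prefix_lst k k' : k <= k' -> exists s, lst k' = lst k ++ s.
Proof. induction 1. exists nil; rewrite app_nil_r; auto.
  destruct IHle as [s Hs]. simpl. unfold same. destruct (excluded_middle_informative _).
  - exists s; auto.
  - exists (s ++ c (S m) :: nil). rewrite Hs, app_assoc. auto. Qed.

Lemma agree k k' j : j <= gc k -> j <= gc k' -> nth_error (lst k) j = nth_error (lst k') j.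
Proof.
  intros H1 H2. destruct (Nat.le_ge_cases k k') as [H|H].
  - destruct (prefix_lst H) as [s Hs]. rewrite Hs, nth_error_app1; auto. rewrite len_lst; lia.
  - destruct (prefix_lst H) as [s Hs]. rewrite Hs, nth_error_app1; auto. rewrite len_lst; lia.
Qed.

Lemma gc_sle k : gc (S k) <= S (gc k).
Proof. destruct (gc_step k) as [[_ E]|[_ E]]; lia. Qed.

Lemma gc_mono k k' : k <= k' -> gc k <= gc k'.
Proof. induction 1; auto. destruct (gc_step m) as [[_ E]|[_ E]]; lia. Qed.

Lemma ctr_exists len : exists w, contracts c len w.
Proof.
  destruct len as [n|].
  - exists (TFin (lst n)), gc. repeat split.
    + intros k Hk. apply gc_step.
    + intros k Hk. simpl. simpl in Hk. rewrite <- (agree k n (j:=gc k)); auto using gc_mono.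
      apply nth_lst.
    + intros j Hj. simpl in Hj. rewrite len_lst in Hj.
      destruct (@ivt gc n eq_refl (fun k _ => gc_sle k) j ltac:(lia)) as [i [Hi Hg]].
      exists i; simpl; auto.
  - destruct (classic (exists N, forall k, gc k <= gc N)) as [[N HN]|HN].
    + exists (TFin (lst N)), gc. repeat split.
      * intros k Hk. apply gc_step.
      * intros k Hk. simpl. rewrite <- (agree k N (j:=gc k)); auto. apply nth_lst.
      * intros j Hj. simpl in Hj. rewrite len_lst in Hj.
        destruct (@ivt gc N eq_refl (fun k _ => gc_sle k) j ltac:(lia)) as [i [Hi Hg]].
        exists i; simpl; auto.
    + assert (Hu : forall j, exists k, j <= gc k).
      { induction j. exists 0; lia. destruct IHj as [k Hk].
        assert (~ forall k', gc k' <= gc k) by (intro X; apply HN; eauto).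
        apply not_all_ex_not in H. destruct H as [k' Hk']. exists k'. lia. }
      set (h := fun j => epsilon (inhabits 0) (fun k => j <= gc k)).
      assert (Hh : forall j, j <= gc (h j)) by (intro j; apply (epsilon_spec (inhabits 0) (fun k => j <= gc k)); auto).
      exists (TInf (fun j => nth j (lst (h j)) (c 0))), gc. repeat split.
      * intros k Hk. apply gc_step.
      * intros k Hk. simpl. f_equal. apply nth_error_nth.
        rewrite (agree (h (gc k)) k (j:=gc k)); auto. apply nth_lst.
      * intros j _. destruct (Hu j) as [k Hk].
        destruct (@ivt gc k eq_refl (fun k _ => gc_sle k) j Hk) as [i [Hi Hg]].
        exists i; simpl; auto.
Qed.
End Constr.

Section Sound.
Variables (AP St : Type) (L : St -> AP -> Prop) (R : St -> St -> Prop).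
Variables (Col : Type) (C : St -> Col).
Hypothesis HC : div_preserving L R C.

Lemma sound phi : forall x y, C x = C y -> sat L R phi x -> sat L R phi y.
Proof.
  destruct HC as [Hcons Hdiv].
  induction phi as [p|p IH|I f IH|p1 IH1 p2 IH2|p IH]; intros x y Hxy Hx; simpl in *.
  - apply (proj1 (Hcons _ _ Hxy) p). auto.
  - intro Hy. apply Hx. apply (IH y x); auto.
  - intro i. apply (IH i x y); auto.
  - destruct Hx as [n [pi [Hp [H2 H1]]]].
    destruct (ctr_exists (fun k => C (pi k)) (Some n)) as [w [g Hg]].
    assert (Ht : ctrace R C x w) by (exists (Some n), pi; split; auto; exists g; auto).
    apply (proj2 (Hcons _ _ Hxy) w) in Ht.
    destruct Ht as [len' [pi' [Hp' [g' Hg']]]].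
    pose proof Hg as [_ [_ [Gt Gsur]]]. pose proof Hg' as [_ [_ [Gt' Gsur']]].
    assert (Hn : in_dom (Some n) n) by (simpl; lia).
    destruct (ex_min (fun j => in_dom len' j /\ g' j = g n) (Gsur' _ (tr_at_pos _ _ (Gt n Hn))))
      as [j [[Hj Hgj] Hmin]].
    exists j, pi'. split; [|split].
    + eapply path_prefix; eauto.
    + apply (IH2 (pi n)); auto.
      pose proof (Gt n Hn) as A. pose proof (Gt' j Hj) as B. rewrite Hgj in B. congruence.
    + intros i Hi. assert (Hdi : in_dom len' i) by (apply (in_dom_le _ Hj); lia).
      destruct (colour_match Hg i Hg' Hdi) as [k' [Hk' [Hc Hgk]]].
      assert (k' <> n) by (intro E; subst k'; apply (Hmin i Hi); split; auto).
      apply (IH1 (pi k')); auto. apply H1. simpl in Hk'. lia.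
  - destruct Hx as [pi [Hp Hall]].
    destruct (ctr_exists (fun k => C (pi k)) None) as [w [g Hg]].
    destruct w as [l|f].
    + assert (Hd : divtrace R C x (TFin l)) by (exists pi; split; auto; split; [exists g; auto|eauto]).
      apply (Hdiv _ _ Hxy) in Hd. destruct Hd as [sig [Hs [[g' Hg'] _]]].
      exists sig. split; auto. intro k.
      destruct (colour_match Hg k Hg' I) as [k' [_ [Hc _]]].
      apply (IH (pi k')); auto.
    + assert (Ht : ctrace R C x (TInf f)) by (exists None, pi; split; auto; exists g; auto).
      apply (proj2 (Hcons _ _ Hxy) _) in Ht.
      destruct Ht as [[n|] [sig [Hs [g' Hg']]]].
      * exfalso. exact (fin_inf_false Hg').
      * exists sig. split; auto. intro k.
        destruct (colour_match Hg k Hg' I) as [k' [_ [Hc _]]].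
        apply (IH (pi k')); auto.
Qed.
End Sound.

Section Compl.
Variables (AP St : Type) (L : St -> AP -> Prop) (R : St -> St -> Prop).
Definition E (x y : St) := forall phi : form AP, sat L R phi x <-> sat L R phi y.
Definition ftop : form AP := @FConj AP Empty_set (fun e => match e with end).
Definition delta (z u : St) : form AP :=
  epsilon (inhabits ftop) (fun phi => sat L R phi z /\ ~ sat L R phi u).
Definition chi (z : St) : form AP :=
  @FConj AP {u : St | ~ E z u} (fun u => delta z (proj1_sig u)).

Lemma E_refl x : E x x. Proof. intro; tauto. Qed.
Lemma E_sym x y : E x y -> E y x. Proof. intros H phi; specialize (H phi); tauto. Qed.
Lemma E_trans x y z : E x y -> E y z -> E x z.
Proof. intros H1 H2 phi; specialize (H1 phi); specialize (H2 phi); tauto. Qed.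

Lemma delta_spec z u : ~ E z u -> sat L R (delta z u) z /\ ~ sat L R (delta z u) u.
Proof.
  intros H. unfold delta. apply epsilon_spec.
  apply not_all_ex_not in H. destruct H as [phi Hphi].
  destruct (classic (sat L R phi z)) as [Hz|Hz].
  - exists phi. split; auto. intro Hu. apply Hphi; tauto.
  - exists (FNeg phi). simpl. split; auto. intro Hu. apply Hphi. tauto.
Qed.

Lemma chi_spec z u : sat L R (chi z) u <-> E z u.
Proof.
  simpl. split.
  - intros H. apply NNPP. intro Hn. specialize (H (exist _ u Hn)). simpl in H.
    apply (proj2 (delta_spec Hn)); auto.
  - intros H [v Hv]. simpl. apply H. apply (delta_spec Hv).
Qed.

Definition C0 (x : St) : St -> Prop := fun z => E x z.

Lemma C0_E x y : C0 x = C0 y <-> E x y.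
Proof.
  split.
  - intros H. assert (A : C0 y y) by apply E_refl. rewrite <- H in A. exact A.
  - intros H. apply functional_extensionality. intro z. apply propositional_extensionality.
    unfold C0. split; intro; eauto using E_trans, E_sym.
Qed.

Lemma EU_transfer x y m pi : E x y -> path R x (Some m) pi -> (forall i, i < m -> E x (pi i)) ->
  exists n rho, path R y (Some n) rho /\ E (pi m) (rho n) /\ forall i, i < n -> E x (rho i).
Proof.
  intros Hxy Hp Hi.
  assert (Hs : sat L R (FEU (chi x) (chi (pi m))) x).
  { simpl sat at 1. exists m, pi. split; auto. split. apply chi_spec, E_refl.
    intros i Hlt. apply chi_spec; auto. }
  apply Hxy in Hs. destruct Hs as [n [rho [Hr [Hn Hlt]]]].
  exists n, rho. split; auto. split. apply chi_spec; auto. intros i Hi'. apply chi_spec; auto.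
Qed.

Lemma EG_transfer x y pi : E x y -> path R x None pi -> (forall k, E x (pi k)) ->
  exists sig, path R y None sig /\ forall k, E x (sig k).
Proof.
  intros Hxy Hp Hk.
  assert (Hs : sat L R (FEG (chi x)) x).
  { simpl sat at 1. exists pi. split; auto. intro k. apply chi_spec; auto. }
  apply Hxy in Hs. destruct Hs as [sig [Hs Hall]].
  exists sig. split; auto. intro k. apply chi_spec; auto.
Qed.

Lemma fin_transfer l : forall x y, E x y ->
  (exists len pi g, path R x len pi /\ cg (fun k => C0 (pi k)) len (TFin l) g) ->
  exists len pi g, path R y len pi /\ cg (fun k => C0 (pi k)) len (TFin l) g.
Proof.
  induction l as [|a l IH]; intros x y Hxy [len [pi [g [Hp Hc]]]].
  - exfalso. destruct Hc as [H0 [_ [Ht _]]]. specialize (Ht 0 ltac:(destruct len; simpl; lia)).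
    rewrite H0 in Ht. discriminate.
  - assert (Ha : C0 x = a).
    { destruct Hp as [Hp0 _]. rewrite <- Hp0. pose proof Hc as [H0 [_ [Ht _]]].
      specialize (Ht 0 ltac:(destruct len; simpl; lia)). rewrite H0 in Ht. simpl in Ht. congruence. }
    destruct l as [|b l'].
    + exists (Some 0), (fun _ => y), (fun _ => 0). split.
      * split; auto. intros k Hk. simpl in Hk. lia.
      * repeat split.
        -- intros k Hk. simpl in Hk. lia.
        -- intros k Hk. simpl. f_equal. rewrite <- Ha. apply C0_E; auto.
        -- intros j Hj. simpl in Hj. exists 0. split; simpl; lia.
    + destruct (decomp Hc) as [m [Hm0 [Hm [Hca [Hcb [Hba [g' Hg']]]]]]].
      assert (HE : forall i, i < m -> E x (pi i)).
      { intros i Hi. apply C0_E. rewrite Ha, Hca; auto. }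
      destruct (EU_transfer Hxy (@path_prefix _ _ _ _ _ m Hp Hm) HE) as [n [rho [Hr [Hrn Hri]]]].
      destruct (IH (pi m) (rho n) Hrn) as [len2 [sig [g2 [Hs Hg2]]]].
      { exists (option_map (fun n => n - m) len), (fun k => pi (m + k)), g'. split; auto.
        eapply path_shift; eauto. }
      assert (Hn0 : 0 < n).
      { destruct n; [|lia]. exfalso. apply Hba. rewrite <- Hcb, <- Ha. apply C0_E.
        destruct Hr as [Hr0 _]. rewrite Hr0 in Hrn. eauto using E_trans, E_sym. }
      assert (Hra : forall i, i < n -> C0 (rho i) = a).
      { intros i Hi. rewrite <- Ha. symmetry. apply C0_E; auto. }
      assert (Hsne : C0 (sig 0) <> a).
      { destruct Hs as [Hs0 _]. rewrite Hs0. intro E1. apply Hba. rewrite <- Hcb, <- E1.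
        apply C0_E. auto. }
      destruct (@cons_path _ _ R C0 y n rho a len2 sig (b::l') g2 Hr Hn0 Hra Hs Hg2 Hsne) as [Hp2 [g3 Hg3]].
      eexists _, _, g3. split; eauto.
Qed.

Lemma div_transfer l : forall x y, E x y ->
  (exists pi g, path R x None pi /\ cg (fun k => C0 (pi k)) None (TFin l) g) ->
  exists pi g, path R y None pi /\ cg (fun k => C0 (pi k)) None (TFin l) g.
Proof.
  induction l as [|a l IH]; intros x y Hxy [pi [g [Hp Hc]]].
  - exfalso. destruct Hc as [H0 [_ [Ht _]]]. specialize (Ht 0 I).
    rewrite H0 in Ht. discriminate.
  - assert (Ha : C0 x = a).
    { destruct Hp as [Hp0 _]. rewrite <- Hp0. pose proof Hc as [H0 [_ [Ht _]]].
      specialize (Ht 0 I). rewrite H0 in Ht. simpl in Ht. congruence. }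
    destruct l as [|b l'].
    + assert (HE : forall k, E x (pi k)).
      { intro k. apply C0_E. rewrite Ha. symmetry. exact (@cg_single _ _ _ _ _ k Hc I). }
      destruct (EG_transfer Hxy Hp HE) as [sig [Hs Hall]].
      exists sig, (fun _ => 0). split; auto. repeat split.
      * intros k _. left. split; auto. apply C0_E.
        eauto using E_trans, E_sym.
      * intros k _. simpl. f_equal. rewrite <- Ha. apply C0_E; auto.
      * intros j Hj. simpl in Hj. exists 0. split; simpl; auto; lia.
    + destruct (decomp Hc) as [m [Hm0 [Hm [Hca [Hcb [Hba [g' Hg']]]]]]].
      assert (HE : forall i, i < m -> E x (pi i)).
      { intros i Hi. apply C0_E. rewrite Ha, Hca; auto. }
      destruct (EU_transfer Hxy (@path_prefix _ _ _ _ _ m Hp Hm) HE) as [n [rho [Hr [Hrn Hri]]]].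
      destruct (IH (pi m) (rho n) Hrn) as [sig [g2 [Hs Hg2]]].
      { exists (fun k => pi (m + k)), g'. split; auto.
        apply (@path_shift _ _ _ _ _ m Hp Hm). }
      assert (Hn0 : 0 < n).
      { destruct n; [|lia]. exfalso. apply Hba. rewrite <- Hcb, <- Ha. apply C0_E.
        destruct Hr as [Hr0 _]. rewrite Hr0 in Hrn. eauto using E_trans, E_sym. }
      assert (Hra : forall i, i < n -> C0 (rho i) = a).
      { intros i Hi. rewrite <- Ha. symmetry. apply C0_E; auto. }
      assert (Hsne : C0 (sig 0) <> a).
      { destruct Hs as [Hs0 _]. rewrite Hs0. intro E1. apply Hba. rewrite <- Hcb, <- E1.
        apply C0_E. auto. }
      destruct (@cons_path _ _ R C0 y n rho a None sig (b::l') g2 Hr Hn0 Hra Hs Hg2 Hsne) as [Hp2 [g3 Hg3]].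
      eexists _, g3. split; eauto.
Qed.

Section Machine.
Variables (x y : St) (len : option nat) (pi : nat -> St) (g : nat -> nat) (f : nat -> St -> Prop).
Hypothesis Hxy : E x y.
Hypothesis Hp : path R x len pi.
Hypothesis Hc : cg (fun k => C0 (pi k)) len (TInf f) g.

Definition Inv j z := exists k, in_dom len k /\ g k = j /\ E (pi k) z.
Definition Spec j z (p : nat * (nat -> St)) :=
  0 < fst p /\ path R z (Some (fst p)) (snd p) /\
  (forall i, i < fst p -> C0 (snd p i) = f j) /\ Inv (S j) (snd p (fst p)).

Lemma fadj j : f (S j) <> f j.
Proof. intro E1. apply (adj Hc j (a:=f j) (b:=f (S j))); auto. Qed.

Lemma step_ex j z : Inv j z -> exists p, Spec j z p.
Proof.
  intros [k [Hk [Hgk Hkz]]].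
  pose proof Hc as [H0 [Hs [Ht Hsur]]].
  destruct (ex_min (fun k' => in_dom len k' /\ g k' = S j) (Hsur (S j) I)) as [k' [[Hk' Hgk'] Hmin]].
  assert (Hlt : k < k').
  { destruct (le_lt_dec k' k) as [Hle|]; auto. pose proof (g_mono' Hc Hle Hk). lia. }
  assert (Hmid : forall i, k <= i -> i < k' -> g i = j).
  { intros i H1 H2. assert (Hdi : in_dom len i) by (apply (in_dom_le _ Hk'); lia).
    pose proof (g_mono' Hc H1 Hdi). pose proof (g_mono' Hc (Nat.lt_le_incl _ _ H2) Hk').
    assert (g i <> S j) by (intro; apply (Hmin i H2); auto). lia. }
  assert (Hcol : forall i, k <= i -> i < k' -> C0 (pi i) = f j).
  { intros i H1 H2. assert (Hdi: in_dom len i) by (apply (in_dom_le _ Hk'); lia).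
    pose proof (Ht i Hdi) as T. rewrite (Hmid i H1 H2) in T. simpl in T. congruence. }
  pose (rho0 := fun i => pi (k + i)).
  assert (Hrho0 : path R (pi k) (Some (k' - k)) rho0).
  { apply (@path_prefix _ _ _ _ _ (k'-k) (@path_shift _ _ _ _ _ k Hp Hk)).
    apply (proj2 (in_dom_shift len k (k'-k) Hk)). replace (k + (k'-k)) with k' by lia. auto. }
  assert (HE : forall i, i < k' - k -> E (pi k) (rho0 i)).
  { intros i Hi. apply C0_E. unfold rho0.
    rewrite (Hcol k) by lia. rewrite (Hcol (k+i)) by lia. reflexivity. }
  destruct (EU_transfer Hkz Hrho0 HE) as [n [rho [Hr [Hrn Hri]]]].
  unfold rho0 in Hrn. replace (k + (k' - k)) with k' in Hrn by lia.
  exists (n, rho). unfold Spec; simpl. split; [|split; [auto|split]].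
  - destruct n; [|lia]. exfalso. apply (fadj (j:=j)). destruct Hr as [Hr0 _]. rewrite Hr0 in Hrn.
    assert (HH : E (pi k) (pi k')) by eauto using E_trans, E_sym.
    apply C0_E in HH.
    pose proof (Ht k' Hk') as T. rewrite Hgk' in T. simpl in T. injection T as T.
    rewrite T, <- HH. apply Hcol; lia.
  - intros i Hi. rewrite <- (Hcol k) by lia. symmetry. apply C0_E. auto.
  - exists k'. split; auto.
Qed.

Definition seg j z : nat * (nat -> St) := epsilon (inhabits (1, fun _ => y)) (Spec j z).
Arguments seg : simpl never.
Lemma seg_spec j z : Inv j z -> Spec j z (seg j z).
Proof. intro H. exact (epsilon_spec _ (Spec j z) (step_ex H)). Qed.

Definition next (s : nat * St * nat) : nat * St * nat :=
  let '(j, z, i) := s in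
  if S i <? fst (seg j z) then (j, z, S i) else (S j, snd (seg j z) (fst (seg j z)), 0).
Definition st k := Nat.iter k next (0, y, 0).
Definition out k := let '(j, z, i) := st k in snd (seg j z) i.
Definition gout k := let '(j, _, _) := st k in j.
Definition MInv (s : nat * St * nat) := let '(j, z, i) := s in Inv j z /\ i < fst (seg j z).

Lemma Inv0 : Inv 0 y.
Proof.
  exists 0. destruct Hc as [H0 _]. destruct Hp as [Hp0 _]. split. destruct len; simpl; lia.
  split; auto. rewrite Hp0; auto.
Qed.

Lemma MInv_st k : MInv (st k).
Proof.
  induction k.
  - simpl. split. apply Inv0. apply (seg_spec Inv0).
  - change (st (S k)) with (next (st k)). destruct (st k) as [[j z] i]. destruct IHk as [HI Hi].
    unfold next. destruct (seg_spec HI) as [Hn [Hpath [Hcols HI']]].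
    destruct (Nat.ltb_spec (S i) (fst (seg j z))).
    + simpl. auto.
    + simpl. split; auto. apply (seg_spec HI').
Qed.

Lemma out_path : path R y None out.
Proof.
  split.
  - unfold out. simpl. destruct (seg_spec Inv0) as [_ [[P0 _] _]]. exact P0.
  - intros k _. unfold out. pose proof (MInv_st k) as M.
    change (st (S k)) with (next (st k)). destruct (st k) as [[j z] i]. destruct M as [HI Hi].
    destruct (seg_spec HI) as [Hn [[P0 Ps] [Hcols HI']]]. unfold next.
    destruct (Nat.ltb_spec (S i) (fst (seg j z))); simpl.
    + apply Ps. simpl; lia.
    + destruct (seg_spec HI') as [_ [[P0' _] _]]. rewrite P0'.
      replace (fst (seg j z)) with (S i) by lia. apply Ps. simpl; lia.
Qed.

Lemma st_inner k j z : st k = (j, z, 0) -> forall i, i < fst (seg j z) -> st (k + i) = (j, z, i).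
Proof.
  intros Hk i. induction i; intros Hi. rewrite Nat.add_0_r; auto.
  rewrite Nat.add_succ_r. change (st (S (k+i))) with (next (st (k + i))). rewrite IHi by lia.
  unfold next. destruct (Nat.ltb_spec (S i) (fst (seg j z))); [reflexivity|lia].
Qed.

Lemma reach j : exists k z, st k = (j, z, 0).
Proof.
  induction j. exists 0, y. reflexivity.
  destruct IHj as [k [z Hk]]. pose proof (MInv_st k) as M. rewrite Hk in M. destruct M as [HI _].
  destruct (seg_spec HI) as [Hn _].
  exists (k + fst (seg j z)), (snd (seg j z) (fst (seg j z))).
  replace (k + fst (seg j z)) with (S (k + (fst (seg j z) - 1))) by lia.
  change (st (S (k + (fst (seg j z) - 1)))) with (next (st (k + (fst (seg j z) - 1)))).
  rewrite (st_inner k Hk) by lia. unfold next.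
  destruct (Nat.ltb_spec (S (fst (seg j z) - 1)) (fst (seg j z))); [lia|reflexivity].
Qed.

Lemma out_cg : cg (fun k => C0 (out k)) None (TInf f) gout.
Proof.
  repeat split.
  - intros k _. unfold out, gout. pose proof (MInv_st k) as M.
    change (st (S k)) with (next (st k)). destruct (st k) as [[j z] i]. destruct M as [HI Hi].
    destruct (seg_spec HI) as [Hn [[P0 Ps] [Hcols HI']]]. unfold next.
    destruct (Nat.ltb_spec (S i) (fst (seg j z))); simpl.
    + left. rewrite !Hcols by lia. auto.
    + right. destruct (seg_spec HI') as [Hn' [[P0' _] [Hcols' _]]]. split; auto.
      rewrite Hcols' by lia. rewrite Hcols by lia. apply fadj.
  - intros k _. unfold out, gout. pose proof (MInv_st k) as M. destruct (st k) as [[j z] i].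
    destruct M as [HI Hi]. destruct (seg_spec HI) as [_ [_ [Hcols _]]]. simpl. rewrite Hcols; auto.
  - intros j _. destruct (reach j) as [k [z Hk]]. exists k. split. exact I. unfold gout. rewrite Hk. reflexivity.
Qed.

Lemma inf_transfer : exists len' pi' g', path R y len' pi' /\ cg (fun k => C0 (pi' k)) len' (TInf f) g'.
Proof. exists None, out, gout. split. apply out_path. apply out_cg. Qed.
End Machine.

Lemma ctrace_transfer x y w : E x y -> ctrace R C0 x w -> ctrace R C0 y w.
Proof.
  intros Hxy [len [pi [Hp [g Hg]]]]. destruct w as [l|f].
  - destruct (fin_transfer (l:=l) Hxy) as [len' [pi' [g' [Hp' Hg']]]].
    { exists len, pi, g. auto. }
    exists len', pi'. split; auto. exists g'; auto.
  - destruct (inf_transfer Hxy Hp Hg) as [len' [pi' [g' [Hp' Hg']]]].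
    exists len', pi'. split; auto. exists g'; auto.
Qed.

Lemma divtrace_transfer x y w : E x y -> divtrace R C0 x w -> divtrace R C0 y w.
Proof.
  intros Hxy [pi [Hp [[g Hg] [l ->]]]].
  destruct (div_transfer (l:=l) Hxy) as [pi' [g' [Hp' Hg']]].
  { exists pi, g. auto. }
  exists pi'. split; auto. split. exists g'; auto. eauto.
Qed.

End Compl.

Theorem theorem7p1 (AP St : Type) (L : St -> AP -> Prop) (R : St -> St -> Prop)
  (s t : St) :
  bbisim_div L R s t <-> (forall phi : form AP, sat L R phi s <-> sat L R phi t).
Proof.
  split.
  - intros [Col [C [HC Hst]]] phi. split; apply (sound HC); auto.
  - intros Hst. exists (St -> Prop), (C0 L R). split.
    + split.
      * intros a b Hab. apply C0_E in Hab. split.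
        -- intro p. exact (Hab (FAtom p)).
        -- intro w. split; apply ctrace_transfer; eauto using E_sym.
      * intros a b Hab w. apply C0_E in Hab. split; apply divtrace_transfer; eauto using E_sym.
    + apply C0_E. exact Hst.
Qed.
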